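(* Let $\mathrm{M}=\langle e_1+I,\ e_2+I\rangle$ and let $$A=\begin{pmatrix}-1&0\\0&1\end{pmatrix},\quad B=\begin{pmatrix}-1&1\\0&1\end{pmatrix},\quad C=\begin{pmatrix}0&1\\1&0\end{pmatrix}.$$ Let $\kappa=(k+K)_\star$ be an element of $\mathrm{Aff}(\mathrm{M})$ such that $K$ has finite order. Then $K$ is conjugate in $\mathrm{GL}(2,\mathbb Z)$ to exactly one of $I,-I,A,C,(BC)^2,AC$ or $BC$. Moreover, with conjugacy of $\kappa$ taken in $\mathrm{Aff}(\mathrm{M})$: (1) If $K=I$ and $\kappa$ has order 2, then $\kappa\in\mathrm{K}_2$ and $\kappa$ is conjugate to $(e_1/2+I)_\star$, where $\mathrm{K}_2=\{I_\star,(e_1/2+I)_\star,(e_2/2+I)_\star,(e_1/2+e_2/2+I)_\star\}$. (2) If $K=-I$, then $\kappa$ is conjugate to $(-I)_\star$. (3) If $K$ is conjugate to $A$ and $\kappa$ has order 2, then $\kappa$ is conjugate to exactly one of $A_\star$ or $(e_2/2+A)_\star$. (4) If $K$ is conjugate to $C$ and $\kappa$ has order 2, then $\kappa$ is conjugate to $C_\star$. (5) If $K$ is conjugate to $(BC)^2$, then $\kappa$ is conjugate to $((BC)^2)_\star$. (6) If $K$ is conjugate to $AC$, then $\kappa$ is conjugate to $(AC)_\star$. (7) If $K$ is conjugate to $BC$, then $\kappa$ is conjugate to $(BC)_\star$.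
   Context: $e_1,e_2$ are the standard basis vectors of $E^2$. Affine maps of $E^2$ are written $a+A$ ($x\mapsto a+Ax$); $a+I$ is translation by $a$. The normalizer $N_A(\mathrm{M})$ of $\mathrm{M}$ in the affine group of $E^2$ consists of all $a+A$ with $a\in E^2$, $A\in\mathrm{GL}(2,\mathbb Z)$. Each $a+A\in N_A(\mathrm{M})$ induces an affinity $(a+A)_\star:\mathrm{M}x\mapsto\mathrm{M}(a+Ax)$ of the torus $E^2/\mathrm{M}$; $\mathrm{Aff}(\mathrm{M})$ is the group of all such affinities, and the linear part $K$ of $\kappa=(k+K)_\star$ is well defined. *)

(* Defs.v *)
From HB Require Import structures.
From mathcomp Require Import all_boot all_order all_algebra.
From mathcomp Require Import reals.
Set Implicit Arguments. Unset Strict Implicit. Unset Printing Implicit Defensive.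
Import Order.TTheory GRing.Theory Num.Theory.
Local Open Scope ring_scope.

Definition mx2 (a b c d : int) : 'M[int]_2 :=
  \matrix_(i < 2, j < 2)
    if (i : nat) == 0%N then (if (j : nat) == 0%N then a else b)
    else (if (j : nat) == 0%N then c else d).

Definition vec2 {R : realType} (x y : R) : 'cV[R]_2 :=
  \col_(i < 2) if (i : nat) == 0%N then x else y.

(* an affine map a + A : x |-> a + A x, with A an integer matrix *)
Definition affmap (R : realType) := ('cV[R]_2 * 'M[int]_2)%type.

Definition aff_apply {R : realType} (f : affmap R) (x : 'cV[R]_2) : 'cV[R]_2 :=
  f.1 + map_mx intr f.2 *m x.

Definition aff_comp {R : realType} (f g : affmap R) : affmap R :=
  (f.1 + map_mx intr f.2 *m g.1, f.2 *m g.2).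

Definition aff_id {R : realType} : affmap R := (0, 1%:M).

Definition aff_pow {R : realType} (f : affmap R) (n : nat) : affmap R :=
  iter n (aff_comp f) aff_id.

(* a + A is in N_A(M): A in GL(2,Z) *)
Definition in_normalizer {R : realType} (f : affmap R) : Prop := f.2 \in unitmx.

Definition in_lattice {R : realType} (v : 'cV[R]_2) : Prop :=
  forall i : 'I_2, v i 0 \is a Num.int.

(* f_* = g_* as maps of the torus E^2/M : M(f x) = M(g x) for all x *)
Definition same_affinity {R : realType} (f g : affmap R) : Prop :=
  forall x, in_lattice (aff_apply f x - aff_apply g x).

Definition aff_order2 {R : realType} (f : affmap R) : Prop :=
  same_affinity (aff_pow f 2) aff_id /\ ~ same_affinity f aff_id.

(* f_* and g_* are conjugate in Aff(M): h_* f_* h_*^{-1} = g_* for some h in N_A(M) *)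
Definition aff_conj {R : realType} (f g : affmap R) : Prop :=
  exists h : affmap R, in_normalizer h /\
    same_affinity (aff_comp h f) (aff_comp g h).

Definition gl_conj (K L : 'M[int]_2) : Prop :=
  exists P : 'M[int]_2, P \in unitmx /\ P *m K *m invmx P = L.

Definition matA : 'M[int]_2 := mx2 (-1) 0 0 1.
Definition matB : 'M[int]_2 := mx2 (-1) 1 0 1.
Definition matC : 'M[int]_2 := mx2 0 1 1 0.
Definition matI : 'M[int]_2 := 1%:M.

Definition reps (i : 'I_7) : 'M[int]_2 :=
  match (i : nat) with
  | 0%N => matI
  | 1%N => - matI
  | 2%N => matA
  | 3%N => matC
  | 4%N => (matB *m matC) *m (matB *m matC)
  | 5%N => matA *m matC
  | _ => matB *m matC
  end.

Definition e1 {R : realType} : 'cV[R]_2 := vec2 1 0.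
Definition e2 {R : realType} : 'cV[R]_2 := vec2 0 1.

(* Main.v *)
Require Import Defs.
From HB Require Import structures.
From mathcomp Require Import all_boot all_order all_algebra.
From mathcomp Require Import reals.
From mathcomp Require Import zify ring lra.
From Stdlib Require Import Classical_Prop.
Set Implicit Arguments. Unset Strict Implicit. Unset Printing Implicit Defensive.
Import Order.TTheory GRing.Theory Num.Theory.
Local Open Scope ring_scope.

Lemma mx2_eta (M : 'M[int]_2) : M = mx2 (M 0 0) (M 0 1) (M 1 0) (M 1 1).
Proof. by apply/matrixP => i j; rewrite mxE; case: i => [[|[|i]] Hi]; case: j => [[|[|j]] Hj] //= /=;
  congr (M _ _); apply: val_inj. Qed.

Lemma mx2E a b c d (i j : 'I_2) : mx2 a b c d i j =
  if (i : nat) == 0%N then (if (j : nat) == 0%N then a else b)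
    else (if (j : nat) == 0%N then c else d).
Proof. by rewrite mxE. Qed.

Lemma mx2_mul a b c d a' b' c' d' : mx2 a b c d *m mx2 a' b' c' d' =
  mx2 (a*a' + b*c') (a*b' + b*d') (c*a'+d*c') (c*b'+d*d').
Proof.
apply/matrixP => i j; rewrite !mxE !big_ord_recl big_ord0 !mxE /= addr0.
by case: i => [[|[|i]] Hi]; case: j => [[|[|j]] Hj] //=.
Qed.

Lemma mx2_eq a b c d a' b' c' d' : mx2 a b c d = mx2 a' b' c' d' ->
  [/\ a = a', b = b', c = c' & d = d'].
Proof.
move=> E; have F : forall i j : 'I_2, mx2 a b c d i j = mx2 a' b' c' d' i j by rewrite E.
by have := F 0 0; have := F 0 1; have := F 1 0; have := F 1 1; rewrite !mxE /=.
Qed.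

Lemma mx2_1 : (1%:M : 'M[int]_2) = mx2 1 0 0 1.
Proof. by apply/matrixP => i j; rewrite !mxE; case: i => [[|[|i]] Hi]; case: j => [[|[|j]] Hj] //=. Qed.

Lemma mx2_opp a b c d : - mx2 a b c d = mx2 (-a) (-b) (-c) (-d).
Proof. by apply/matrixP => i j; rewrite !mxE; case: i => [[|[|i]] Hi]; case: j => [[|[|j]] Hj] //=. Qed.

Lemma det_mx2 a b c d : \det (mx2 a b c d) = a * d - b * c.
Proof.
rewrite (expand_det_row _ 0) !big_ord_recl big_ord0 /cofactor !det_mx11 !mxE /=.
by rewrite /bump /=; ring.
Qed.

Lemma tr_mx2 a b c d : \tr (mx2 a b c d) = a + d.
Proof. by rewrite /mxtrace !big_ord_recl big_ord0 !mxE /= addr0. Qed.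

Lemma unit_int (x : int) : (x \is a GRing.unit) = (x == 1) || (x == -1).
Proof. by []. Qed.

Lemma pow_inv (a b c d : int) (H : (a*d - b*c = 1 /\ 2 <= a + d) \/ (a*d-b*c = -1 /\ 1 <= a+d)) m :
  exists p q : int, [/\ 0 <= q <= p, 1 <= p &
  mx2 a b c d ^+ m.+1 = mx2 (p*a - (a*d-b*c)*q) (p*b) (p*c) (p*d - (a*d-b*c)*q)].
Proof.
elim: m => [|m [p [q [H1 H2 E]]]].
  by exists 1, 0; split => //; rewrite expr1 !mul1r mulr0 !subr0.
exists (p*(a+d) - (a*d-b*c)*q), p; split.
- by case: H => [[-> ?]|[-> ?]]; nia.
- by case: H => [[-> ?]|[-> ?]]; nia.
rewrite exprSr E -mulmxE mx2_mul; congr mx2; ring.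
Qed.

Lemma fin_scalar (a b c d : int) n : (0 < n)%N -> mx2 a b c d ^+ n = 1%:M ->
  (a*d - b*c = 1 /\ 2 <= a + d) \/ (a*d-b*c = -1 /\ 1 <= a+d) ->
  [/\ a = 1, b = 0, c = 0 & d = 1].
Proof.
case: n => // n _ E H; have [p [q [H1 H2 E2]]] := pow_inv H n.
move: E; rewrite E2 mx2_1 => /mx2_eq [Ea Eb Ec Ed].
have p0 : p != 0 by lia.
have b0 : b = 0 by apply/eqP; move: Eb => /eqP; rewrite mulf_eq0 (negPf p0).
have c0 : c = 0 by apply/eqP; move: Ec => /eqP; rewrite mulf_eq0 (negPf p0).
subst b c; have ad : a = d by apply: (mulfI p0) => /=; lia.
subst d; case: H => [[? ?]|[? ?]]; split => //; nia.
Qed.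

Lemma fin_class a b c d : (a*d-b*c = 1 \/ a*d-b*c = -1) ->
  (exists2 n, (0<n)%N & mx2 a b c d ^+ n = 1%:M) ->
  [/\ a = 1, b = 0, c = 0 & d = 1] \/ [/\ a = -1, b = 0, c = 0 & d = -1] \/
  (a*d-b*c = 1 /\ -1 <= a+d <= 1) \/ (a*d-b*c = -1 /\ a+d = 0).
Proof.
move=> hs [n n0 E].
have E' : mx2 (-a) (-b) (-c) (-d) ^+ (n * 2) = 1%:M.
  by rewrite -mx2_opp mulnC exprM sqrrN -exprM mulnC exprM E expr1n.
have n2 : (0 < n * 2)%N by rewrite muln_gt0 n0.
have [|h1] := Classical_Prop.classic ((a*d - b*c = 1 /\ 2 <= a + d) \/ (a*d-b*c = -1 /\ 1 <= a+d)).
  by move/(fin_scalar n0 E) => ?; left.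
have [|h2] := Classical_Prop.classic (((-a)*(-d) - (-b)*(-c) = 1 /\ 2 <= -a + -d) \/ ((-a)*(-d) - (-b)*(-c) = -1 /\ 1 <= -a + -d)).
  move/(fin_scalar n2 E') => [? ? ? ?]; right; left; split; lia.
right; right; lia.
Qed.

Lemma round_ex (a c : int) : c != 0 -> exists x, 2 * `|a + x*c| <= `|c|.
Proof.
move=> c0; have E := divz_eq a c; have r0 := modz_ge0 a c0; have r1 := ltz_mod a c0.
set q := (a %/ c)%Z in E; set r := (a %% c)%Z in E r0 r1.
have [h|h] := lerP (2*r) `|c|.
  by exists (-q); lia.
have [cp|cn] := ltrP 0 c.
  by exists (-q-1); lia.
by exists (-q+1); lia.
Qed.

Definition conjz (K L : 'M[int]_2) := exists P, P \in unitmx /\ P *m K = L *m P.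

Lemma conjz_refl K : conjz K K.
Proof. by exists 1%:M; rewrite unitmx1 mul1mx mulmx1. Qed.

Lemma conjz_trans K L M : conjz K L -> conjz L M -> conjz K M.
Proof.
move=> [P [uP EP]] [Q [uQ EQ]]; exists (Q *m P); split; first by rewrite unitmx_mul uP uQ.
by rewrite -mulmxA EP !mulmxA EQ.
Qed.

Lemma conjz_sym K L : conjz K L -> conjz L K.
Proof.
move=> [P [uP EP]]; exists (invmx P); split; first by rewrite unitmx_inv.
have -> : invmx P *m L = invmx P *m (L *m P) *m invmx P by rewrite !mulmxA mulmxK.
by rewrite -EP !mulmxA mulVmx // mul1mx.
Qed.

Lemma conjz_gl K L : conjz K L <-> gl_conj K L.
Proof.
split=> [[P [uP EP]]|[P [uP EP]]]; exists P; split => //.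
  by rewrite EP mulmxK.
by rewrite -EP mulmxKV.
Qed.

Lemma unit_mx2 a b c d : (mx2 a b c d \in unitmx) = (a*d - b*c == 1) || (a*d - b*c == -1).
Proof. by rewrite unitmxE det_mx2. Qed.

Lemma conjz_mx2 a b c d a' b' c' d' p q r u :
  (p*u - q*r = 1 \/ p*u - q*r = -1) ->
  mx2 p q r u *m mx2 a b c d = mx2 a' b' c' d' *m mx2 p q r u ->
  conjz (mx2 a b c d) (mx2 a' b' c' d').
Proof.
move=> h E; exists (mx2 p q r u); split => //.
by rewrite unit_mx2; case: h => ->; rewrite eqxx ?orbT.
Qed.

Lemma key_ineq (a1 b1 c d1 s t : int) : a1*d1 - b1*c = s -> a1 + d1 = t -> 2 * `|a1| <= `|c| -> 2 <= `|c| -> -1 <= t <= 1 -> (s = 1 \/ s = -1) -> `|b1| < `|c|.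
Proof.
move=> h1 h2 h3 h4 h5 h6.
have e : b1 * c = a1 * (t - a1) - s by rewrite -h1 -h2; ring.
have: `|b1| * `|c| <= `|a1| * `|a1| + `|a1| + 1.
  rewrite -normrM e. 
  have : `|a1 * (t - a1) - s| <= `|a1 * (t-a1)| + `|s| by apply: ler_normB.
  rewrite normrM. have: `|t - a1| <= `|a1| + 1 by lia.
  have: `|s| = 1 by lia. nia.
nia.
Qed.

Lemma descent N : forall a b c d, `|c| < N%:Z -> (a*d-b*c = 1 \/ a*d-b*c = -1) -> -1 <= a+d <= 1 ->
  exists a' b' c' d', [/\ conjz (mx2 a b c d) (mx2 a' b' c' d'), a'*d'-b'*c' = a*d-b*c,
     a'+d' = a+d & (c' = 0 \/ c' = 1)].
Proof.
elim: N => [|N IH] a b c d hc hs ht; first by lia.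
have [c01|c01] := Classical_Prop.classic (c = 0 \/ c = 1).
  by exists a, b, c, d; split => //; apply: conjz_refl.
have [cm1|cm1] := Classical_Prop.classic (c = -1).
  subst c; exists a, (-b), 1, d; split; [|by ring|by []|by right].
  - apply: (@conjz_mx2 _ _ _ _ _ _ _ _ 1 0 0 (-1)); first by right; ring.
    by rewrite !mx2_mul; congr mx2; ring.
have c0 : c != 0 by apply/eqP; lia.
have [x hx] := round_ex a c0.
set a1 := a + x*c; set d1 := d - x*c; set b1 := b + x*d - x*a1.
have h1 : a1*d1 - b1*c = a*d-b*c by rewrite /b1 /a1 /d1; ring.
have h2 : a1 + d1 = a + d by rewrite /a1 /d1; ring.
have hb := key_ineq h1 h2 hx ltac:(lia) ht hs.
have [a' [b' [c' [d' [H1 H2 H3 H4]]]]] := IH d1 c b1 a1 ltac:(lia) ltac:(lia) ltac:(lia).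
exists a', b', c', d'; split => //; [|lia|lia].
apply: conjz_trans H1.
apply: (@conjz_mx2 _ _ _ _ _ _ _ _ 0 1 1 x); first by right; ring.
by rewrite !mx2_mul; congr mx2; rewrite /b1 /a1 /d1; ring.
Qed.

Definition reps2 (n : nat) : 'M[int]_2 :=
  match n with
  | 0%N => mx2 1 0 0 1
  | 1%N => mx2 (-1) 0 0 (-1)
  | 2%N => mx2 (-1) 0 0 1
  | 3%N => mx2 0 1 1 0
  | 4%N => mx2 0 (-1) 1 (-1)
  | 5%N => mx2 0 (-1) 1 0
  | _ => mx2 1 (-1) 1 0
  end.

Lemma BC_mx : matB *m matC = mx2 1 (-1) 1 0.
Proof. by rewrite /matB /matC mx2_mul; congr mx2; ring. Qed.

Lemma reps_E (i : 'I_7) : reps i = reps2 i.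
Proof.
case: i => [[|[|[|[|[|[|[|i]]]]]]] hi] //=; rewrite /reps /=;
 first [ exact: mx2_1 | by rewrite /matI mx2_1 mx2_opp | by rewrite BC_mx mx2_mul; congr mx2; ring
  | by rewrite /matA /matC mx2_mul; congr mx2; ring | exact: BC_mx ].
Qed.

Lemma conjz_inv K L : conjz K L -> \det K = \det L /\ \tr K = \tr L.
Proof.
move=> [P [uP EP]]; split.
  have: \det P * \det K = \det L * \det P by rewrite -!det_mulmx EP.
  rewrite mulrC; apply: mulIf; apply/eqP => h.
  by move: uP; rewrite unitmxE h unitr0.
have -> : L = P *m K *m invmx P by rewrite EP mulmxK.
by rewrite -mulmxA mxtrace_mulC -mulmxA mulVmx // mulmx1.
Qed.

Lemma A_not_C : ~ conjz (mx2 (-1) 0 0 1) (mx2 0 1 1 0).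
Proof.
move=> [P [uP EP]]; move: uP EP; rewrite (mx2_eta P) unit_mx2 !mx2_mul.
move=> hu /mx2_eq [e1 e2 e3 e4].
set p := P 0 0 in hu e1 e2 e3 e4 *; set q := P 0 1 in hu e1 e2 e3 e4 *.
set r := P 1 0 in hu e1 e2 e3 e4 *; set u := P 1 1 in hu e1 e2 e3 e4 *.
have er : r = -p by lia.
have eu : u = q by lia.
rewrite er eu in hu; move: hu => /orP [] /eqP; lia.
Qed.

Lemma reps_inj (i j : 'I_7) : conjz (reps i) (reps j) -> i = j.
Proof.
rewrite !reps_E; move=> H; have [hd ht] := conjz_inv H.
apply: val_inj => /=; move: H hd ht.
case: i => [[|[|[|[|[|[|[|i]]]]]]] hi] //=; case: j => [[|[|[|[|[|[|[|j]]]]]]] hj] //=;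
  rewrite ?det_mx2 ?tr_mx2 => H hd ht; try lia.
- by case: A_not_C.
- by case: A_not_C; apply: conjz_sym.
Qed.

Ltac cmx_close := first [by left; ring | by right; ring | by rewrite !mx2_mul; congr mx2; ring].
Lemma ex_trans K L : conjz K L -> (exists i : 'I_7, conjz L (reps i)) -> exists i : 'I_7, conjz K (reps i).
Proof. by move=> H [i Hi]; exists i; apply: conjz_trans Hi. Qed.

Lemma exist_class a b c d : (a*d-b*c = 1 \/ a*d-b*c = -1) ->
  (exists2 n, (0<n)%N & mx2 a b c d ^+ n = 1%:M) -> exists i : 'I_7, conjz (mx2 a b c d) (reps i).
Proof.
move=> hs hn.
case: (fin_class hs hn) => [[-> -> -> ->]|[[-> -> -> ->]|hst]].
- by exists (Ordinal (isT : (0 < 7)%N)); rewrite reps_E; apply: conjz_refl.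
- by exists (Ordinal (isT : (1 < 7)%N)); rewrite reps_E; apply: conjz_refl.
have hs' : (a*d-b*c = 1 \/ a*d-b*c = -1) /\ -1 <= a+d <= 1 by lia.
case: hs' => hs' ht.
have hc : `|c| < ((absz c).+1)%:Z by lia.
have [a' [b' [c' [d' [H1 H2 H3 H4]]]]] := descent hc hs' ht.
apply: (ex_trans H1).
case: H4 => hc4; subst c'.
-
  have ha : a' = 1 \/ a' = -1 by nia.
  have hd : d' = - a' by nia.
  subst d'.
  have E := divz_eq b' 2; have r0 := @modz_ge0 b' 2 isT; have r1 := @ltz_pmod b' 2 isT.
  set q := (b' %/ 2)%Z in E; set r := (b' %% 2)%Z in E r0 r1.
  have T : conjz (mx2 a' b' 0 (-a')) (mx2 a' r 0 (-a')).
    apply: (@conjz_mx2 _ _ _ _ _ _ _ _ 1 (a' * q) 0 1); first by left; ring.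
    rewrite !mx2_mul; congr mx2; try ring.
    by case: ha => ->; rewrite E; ring.
  apply: (ex_trans T).
  have hr : r = 0 \/ r = 1 by lia.
  case: ha => ->; case: hr => ->; rewrite ?opprK.
  + exists (Ordinal (isT : (2 < 7)%N)); rewrite reps_E /=; apply: (@conjz_mx2 _ _ _ _ _ _ _ _ 0 1 1 0); cmx_close.
  + exists (Ordinal (isT : (3 < 7)%N)); rewrite reps_E /=; apply: (@conjz_mx2 _ _ _ _ _ _ _ _ 1 0 1 1); cmx_close.
  + exists (Ordinal (isT : (2 < 7)%N)); rewrite reps_E /=; apply: conjz_refl.
  + exists (Ordinal (isT : (3 < 7)%N)); rewrite reps_E /=; apply: (@conjz_mx2 _ _ _ _ _ _ _ _ 1 0 (-1) 1); cmx_close.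
- have T : conjz (mx2 a' b' 1 d') (mx2 0 (-(a*d-b*c)) 1 (a+d)).
    apply: (@conjz_mx2 _ _ _ _ _ _ _ _ 1 (-a') 0 1); first by left; ring.
    rewrite !mx2_mul; congr mx2; rewrite -?H2 -?H3; ring.
  apply: (ex_trans T).
  have : (a*d-b*c = 1 /\ (a+d = 0 \/ a+d = 1 \/ a+d = -1)) \/ (a*d-b*c = -1 /\ a + d = 0) by lia.
  case=> [[-> [->|[->|->]]]|[-> ->]].
  + exists (Ordinal (isT : (5 < 7)%N)); rewrite reps_E /=; apply: conjz_refl.
  + exists (Ordinal (isT : (6 < 7)%N)); rewrite reps_E /=; apply: (@conjz_mx2 _ _ _ _ _ _ _ _ 1 1 0 1); cmx_close.
  + exists (Ordinal (isT : (4 < 7)%N)); rewrite reps_E /=; apply: conjz_refl.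
  + exists (Ordinal (isT : (3 < 7)%N)); rewrite reps_E /=; apply: conjz_refl.
Qed.


Section Real.
Variable R : realType.
Implicit Types x y z : R.

Lemma vec2_eta (v : 'cV[R]_2) : v = vec2 (v 0 0) (v 1 0).
Proof.
apply/matrixP => i j; rewrite !mxE; rewrite (ord1 j).
by case: i => [[|[|i]] Hi] //=; congr (v _ _); apply: val_inj.
Qed.

Lemma vec2_add x y x' y' : vec2 x y + vec2 x' y' = vec2 (x + x') (y + y').
Proof. by apply/matrixP => i j; rewrite !mxE; case: ifP. Qed.

Lemma vec2_opp x y : - vec2 x y = vec2 (- x) (- y).
Proof. by apply/matrixP => i j; rewrite !mxE; case: ifP. Qed.

Lemma vec2_sub x y x' y' : vec2 x y - vec2 x' y' = vec2 (x - x') (y - y').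
Proof. by rewrite vec2_opp vec2_add. Qed.

Lemma vec2_scale a x y : a *: vec2 x y = vec2 (a * x) (a * y).
Proof. by apply/matrixP => i j; rewrite !mxE; case: ifP. Qed.

Lemma vec2_0 : (0 : 'cV[R]_2) = vec2 0 0.
Proof. by apply/matrixP => i j; rewrite !mxE; case: ifP. Qed.

Lemma mulR a b c d x y : map_mx intr (mx2 a b c d) *m vec2 x y =
  vec2 (a%:~R * x + b%:~R * y) (c%:~R * x + d%:~R * y) :> 'cV[R]_2.
Proof.
apply/matrixP => i j; rewrite !mxE !big_ord_recl big_ord0 !mxE /= addr0.
by case: i => [[|[|i]] Hi].
Qed.

Lemma lattice_vec2 x y : in_lattice (vec2 x y) <-> x \is a Num.int /\ y \is a Num.int.
Proof.
split => [h|[hx hy] i].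
  by have := h 0; have := h 1; rewrite !mxE /=.
by rewrite mxE; case: ifP.
Qed.

Lemma int_half : ~ ((2%:R)^-1 : R) \is a Num.int.
Proof.
move/intrP => [m hm].
have h0 : (0 : R) < m%:~R by rewrite -hm invr_gt0 ltr0n.
have h1 : (m%:~R : R) < 1 by rewrite -hm invf_lt1 ?ltr0n ?ltr1n.
rewrite ltr0z in h0; rewrite ltrz1 in h1; lia.
Qed.


Lemma int_zero (m : int) : (forall r : R, m%:~R * r \is a Num.int) -> m = 0.
Proof.
move=> h; apply/eqP; apply/negPn/negP => m0.
have mR : (m%:~R : R) != 0 by rewrite intr_eq0.
apply: (@int_half); have := h (m%:~R * 2%:R)^-1.
suff -> : (m%:~R * (m%:~R * 2%:R)^-1 : R) = 2%:R^-1 by [].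
by field.
Qed.

Lemma lattice_sub (u v : 'cV[R]_2) : in_lattice u -> in_lattice v -> in_lattice (u - v).
Proof. by move=> hu hv i; rewrite !mxE; apply: rpredB. Qed.

Lemma lattice_add (u v : 'cV[R]_2) : in_lattice u -> in_lattice v -> in_lattice (u + v).
Proof. by move=> hu hv i; rewrite !mxE; apply: rpredD. Qed.

Lemma lattice_map (H : 'M[int]_2) (u : 'cV[R]_2) : in_lattice u -> in_lattice (map_mx intr H *m u).
Proof.
rewrite (vec2_eta u) (mx2_eta H) mulR => /lattice_vec2 [h1 h2]; apply/lattice_vec2.
by split; apply: rpredD; apply: rpredM => //; apply: intr_int.
Qed.

Lemma same_aff_iff (f g : affmap R) : same_affinity f g <-> f.2 = g.2 /\ in_lattice (f.1 - g.1).
Proof.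
split; last first.
  by move=> [E L] w; rewrite /aff_apply E opprD addrACA subrr addr0.
move=> h; have h0 := h 0; rewrite /aff_apply !mulmx0 !addr0 in h0; split => //.
have hx : forall w : 'cV[R]_2, in_lattice (map_mx intr (f.2 - g.2) *m w).
  move=> w; have := lattice_sub (h w) (h 0).
  rewrite /aff_apply !mulmx0 !addr0.
  suff -> : f.1 + map_mx intr f.2 *m w - (g.1 + map_mx intr g.2 *m w) - (f.1 - g.1) =
     map_mx intr (f.2 - g.2) *m w by [].
  rewrite map_mxB mulmxBl /=.
  by apply/matrixP => i j; rewrite !mxE; ring.
apply/eqP; rewrite -subr_eq0; apply/eqP.
move: hx; rewrite (mx2_eta (f.2 - g.2)) => hx.
have Z (r : R) : [/\ ((f.2 - g.2) 0 0)%:~R * r \is a Num.int, ((f.2 - g.2) 1 0)%:~R * r \is a Num.int,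
   ((f.2 - g.2) 0 1)%:~R * r \is a Num.int & ((f.2 - g.2) 1 1)%:~R * r \is a Num.int].
  have := hx (vec2 r 0); have := hx (vec2 0 r); rewrite !mulR !mulr0 !addr0 !add0r.
  by move=> /lattice_vec2 [? ?] /lattice_vec2 [? ?].
rewrite (int_zero (fun r => let: And4 a _ _ _ := Z r in a)).
rewrite (int_zero (fun r => let: And4 _ a _ _ := Z r in a)).
rewrite (int_zero (fun r => let: And4 _ _ a _ := Z r in a)).
rewrite (int_zero (fun r => let: And4 _ _ _ a := Z r in a)).
by apply/matrixP => i j; rewrite !mxE; case: ifP => _; case: ifP.
Qed.

Lemma aff_conj_iff (f g : affmap R) : aff_conj f g <-> exists h1 H, [/\ H \in unitmx, H *m f.2 = g.2 *m H &
  in_lattice (h1 + map_mx intr H *m f.1 - (g.1 + map_mx intr g.2 *m h1))].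
Proof.
split.
  move=> [[h1 H] [uH /same_aff_iff [E L]]]; exists h1, H; split => //.
move=> [h1 [H [uH E L]]]; exists (h1, H); split => //; apply/same_aff_iff; split => //.
Qed.

Lemma pow2_iff (f : affmap R) : same_affinity (aff_pow f 2) aff_id <->
  f.2 *m f.2 = 1%:M /\ in_lattice (f.1 + map_mx intr f.2 *m f.1).
Proof.
rewrite same_aff_iff /aff_pow /= /aff_comp /= !mulmx0 !addr0 mulmx1 subr0.
by [].
Qed.

Lemma half_cases z : z + z \is a Num.int -> z \is a Num.int \/ z - 2%:R^-1 \is a Num.int.
Proof.
move/intrP => [n hn]; have E := divz_eq n 2; have r0 := @modz_ge0 n 2 isT; have r1 := @ltz_pmod n 2 isT.
set q := (n %/ 2)%Z in E; set r := (n %% 2)%Z in E r0 r1.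
have : r = 0 \/ r = 1 by lia.
case => er; rewrite er in E.
  left; apply/intrP; exists q.
  have -> : z = (z + z) / 2%:R by field.
  by rewrite hn E addr0 intrM /= mulfK // pnatr_eq0.
right; apply/intrP; exists q.
have -> : z - 2%:R^-1 = ((z + z) - 1) / 2%:R by field.
rewrite hn E intrD intrM /= addrK mulfK // pnatr_eq0 //.
Qed.


Lemma int_sub_half_int z w : z \is a Num.int -> z - w \is a Num.int -> w \is a Num.int.
Proof. by move=> h1 h2; have := rpredB h1 h2; rewrite opprB addrC subrK. Qed.

Lemma part1 (k : 'cV[R]_2) : aff_order2 ((k, 1%:M) : affmap R) ->
     (same_affinity (k, 1%:M) aff_id \/
      same_affinity (k, 1%:M) ((2%:R)^-1 *: e1, 1%:M) \/
      same_affinity (k, 1%:M) ((2%:R)^-1 *: e2, 1%:M) \/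
      same_affinity (k, 1%:M) ((2%:R)^-1 *: e1 + (2%:R)^-1 *: e2, 1%:M)) /\
     aff_conj (k, 1%:M) ((2%:R)^-1 *: e1, 1%:M).
Proof.
move=> [/pow2_iff [_ h2] hn]; move: h2 hn.
rewrite map_mx1 mul1mx (vec2_eta k); set x := k 0 0; set y := k 1 0.
rewrite vec2_add => /lattice_vec2 [/half_cases hx /half_cases hy] hn.
rewrite /e1 /e2 !vec2_scale !mulr1 !mulr0 vec2_add !addr0 !add0r.
have nl : ~ (x \is a Num.int /\ y \is a Num.int).
  move=> [h1 h2]; apply: hn; apply/same_aff_iff; split => //=.
  by rewrite subr0; apply/lattice_vec2.
have C0 (P : 'M[int]_2) : P \in unitmx -> in_lattice (map_mx intr P *m vec2 x y - vec2 2%:R^-1 0) ->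
   aff_conj (vec2 x y, 1%:M) (vec2 2%:R^-1 0, 1%:M).
  move=> uP L; apply/aff_conj_iff; exists 0, P; split => //=.
    by rewrite mulmx1 mul1mx.
  by rewrite add0r mulmx0 addr0.
case: hx => hx; case: hy => hy.
- by case: nl.
- split.
    do 2 right; left; apply/same_aff_iff; split => //=.
    by rewrite vec2_sub subr0; apply/lattice_vec2.
  apply: (C0 (mx2 0 1 1 0)); first by rewrite unit_mx2.
  rewrite mulR vec2_sub /= !mul0r !mul1r !add0r addr0 subr0; apply/lattice_vec2; split => //.
- split.
    right; left; apply/same_aff_iff; split => //=.
    by rewrite vec2_sub subr0; apply/lattice_vec2.
  apply: (C0 1%:M); first by rewrite unitmx1.
  by rewrite map_mx1 mul1mx vec2_sub subr0; apply/lattice_vec2.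
- split.
    do 3 right; apply/same_aff_iff; split => //=.
    by rewrite vec2_sub; apply/lattice_vec2.
  apply: (C0 (mx2 1 0 (-1) 1)); first by rewrite unit_mx2.
  rewrite mulR vec2_sub /= !mul0r !mul1r addr0 subr0; apply/lattice_vec2; split => //.
  have -> : (-1)%:~R * x + y = (y - 2%:R^-1) - (x - 2%:R^-1) :> R by rewrite intrN /=; ring.
  exact: rpredB.
Qed.


Lemma conj_order2 (k : 'cV[R]_2) K G P : P *m K = G *m P -> in_lattice (k + map_mx intr K *m k) ->
  in_lattice (map_mx intr P *m k + map_mx intr G *m (map_mx intr P *m k)).
Proof.
move=> E /(lattice_map P); rewrite mulmxDr mulmxA -map_mxM E map_mxM -mulmxA //.
Qed.

Lemma fixpt g1 g2 g3 g4 (w : 'cV[R]_2) :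
  ((1 - g1) * (1 - g4) - g2 * g3 != 0) ->
  exists h : 'cV[R]_2, h + w - (0 + map_mx intr (mx2 g1 g2 g3 g4) *m h) = 0.
Proof.
move=> hD.
have hD' : ((1 - g1%:~R) * (1 - g4%:~R) - g2%:~R * g3%:~R : R) != 0.
  by move: hD; rewrite -(intr_eq0 R) intrB !intrM !intrB.
set a := 1 - (g1%:~R : R); set b := - (g2%:~R : R); set c := - (g3%:~R : R); set d := 1 - (g4%:~R : R).
rewrite (vec2_eta w); set w1 := w 0 0; set w2 := w 1 0.
have hD2 : a * d - b * c != 0 by rewrite /a /b /c /d mulrNN.
exists (vec2 ((- d * w1 + b * w2) / (a * d - b * c)) ((c * w1 - a * w2) / (a * d - b * c))).
rewrite mulR add0r vec2_add vec2_sub vec2_0; congr vec2.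
  by rewrite /a /b /c /d in hD2 *; field.
by rewrite /a /b /c /d in hD2 *; field.
Qed.

Lemma part_rot (k : 'cV[R]_2) K g1 g2 g3 g4 : gl_conj K (mx2 g1 g2 g3 g4) ->
  ((1 - g1) * (1 - g4) - g2 * g3 != 0) -> aff_conj ((k, K) : affmap R) (0, mx2 g1 g2 g3 g4).
Proof.
move=> /conjz_gl [P [uP EP]] hD.
have [h Eh] := fixpt (map_mx intr P *m k) hD.
apply/aff_conj_iff; exists h, P; split => //=.
by rewrite Eh => i; rewrite mxE int_num0.
Qed.


Lemma int_eq x y : x = y -> y \is a Num.int -> x \is a Num.int.
Proof. by move=> ->. Qed.

Lemma part3 (k : 'cV[R]_2) K : gl_conj K matA -> aff_order2 ((k, K) : affmap R) ->
     let P := aff_conj ((k, K) : affmap R) (0, matA) in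
     let Q := aff_conj ((k, K) : affmap R) ((2%:R)^-1 *: e2, matA) in
     (P \/ Q) /\ ~ (P /\ Q).
Proof.
move=> /conjz_gl [P [uP EP]] [/pow2_iff [_ h2] _] /=.
have L := conj_order2 EP h2.
split.
  move: L; set w := map_mx intr P *m k; rewrite (vec2_eta w); set w1 := w 0 0; set w2 := w 1 0.
  rewrite /matA mulR vec2_add /= => /lattice_vec2 [_ hw].
  have hw' : w2 + w2 \is a Num.int by apply: int_eq hw; rewrite !mul0r !mul1r add0r.
  case: (half_cases hw') => hh; [left|right]; apply/aff_conj_iff; exists (vec2 (- (w1 / 2%:R)) 0), P;
    split => //=; rewrite -/w (vec2_eta w) -/w1 -/w2 ?add0r mulR; try rewrite /e2 vec2_scale;
    rewrite !vec2_add vec2_sub; apply/lattice_vec2; rewrite /= ?intrN; split.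
  - by apply: (@int_eq _ 0); [field | exact: int_num0].
  - by apply: int_eq hh; ring.
  - by apply: (@int_eq _ 0); [field | exact: int_num0].
  - by apply: int_eq hh; ring.
move=> [/aff_conj_iff [h [H [uH EH LH]]] /aff_conj_iff [h' [H' [uH' EH' LH']]]].
simpl in EH, LH, EH', LH'.
set v := map_mx intr H *m k in LH; set v' := map_mx intr H' *m k in LH'.
have Ev0 : v' = map_mx intr (H' *m invmx H) *m v.
  by rewrite /v /v' mulmxA -map_mxM -mulmxA mulVmx // mulmx1.
clearbody v v'.
have hv : v 1 0 \is a Num.int.
  move: LH; rewrite (vec2_eta h) (vec2_eta v) /matA mulR add0r vec2_add vec2_sub => /lattice_vec2 [_].
  by apply: int_eq; rewrite mxE /=; ring.
have hv' : v' 1 0 - 2%:R^-1 \is a Num.int.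
  move: LH'; rewrite (vec2_eta h') (vec2_eta v') /matA /e2 vec2_scale mulR vec2_add vec2_add vec2_sub.
  move=> /lattice_vec2 [_].
  by apply: int_eq; rewrite !mxE /= !mul0r !mul1r !add0r ?mulr1; ring.
have E1 : invmx H *m matA = K *m invmx H.
  have E2 : invmx H *m matA *m H = K by rewrite -mulmxA -EH mulmxA mulVmx // mul1mx.
  by rewrite -E2 mulmxK.
have EM : (H' *m invmx H) *m matA = matA *m (H' *m invmx H).
  by rewrite -mulmxA E1 mulmxA EH' mulmxA.
have Ev := Ev0.
move: EM Ev; move: (H' *m invmx H) => M.
rewrite (mx2_eta M) /matA !mx2_mul => /mx2_eq [_ _ e3 _].
move: e3; set m10 := M 1 0 => e3.
have m0 : m10 = 0 by lia.
rewrite m0 (vec2_eta v) mulR => Ev.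
have : v' 1 0 \is a Num.int by rewrite Ev !mxE /= mul0r add0r; apply: rpredM => //; apply: intr_int.
move=> hv''; apply: int_half; apply: int_eq (rpredB hv'' hv'); ring.
Qed.


Lemma part4 (k : 'cV[R]_2) K : gl_conj K matC -> aff_order2 ((k, K) : affmap R) ->
  aff_conj ((k, K) : affmap R) (0, matC).
Proof.
move=> /conjz_gl [P [uP EP]] [/pow2_iff [_ h2] _] /=.
have L := conj_order2 EP h2.
move: L; set w := map_mx intr P *m k; rewrite (vec2_eta w); set w1 := w 0 0; set w2 := w 1 0.
rewrite /matC mulR vec2_add /= => /lattice_vec2 [hw _].
apply/aff_conj_iff; exists (vec2 (- w1) 0), P; split => //=.
rewrite -/w (vec2_eta w) -/w1 -/w2 add0r mulR vec2_add vec2_sub; apply/lattice_vec2; split.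
  by apply: (@int_eq _ 0); [rewrite /=; ring | exact: int_num0].
by apply: int_eq hw; rewrite /=; ring.
Qed.

End Real.

Lemma BC2_mx : (matB *m matC) *m (matB *m matC) = mx2 0 (-1) 1 (-1).
Proof. exact: (reps_E (Ordinal (isT : (4 < 7)%N))). Qed.
Lemma AC_mx : matA *m matC = mx2 0 (-1) 1 0.
Proof. exact: (reps_E (Ordinal (isT : (5 < 7)%N))). Qed.

Theorem lemma32 (R : realType) (k : 'cV[R]_2) (K : 'M[int]_2) :
  K \in unitmx ->
  (exists2 n : nat, (0 < n)%N & K ^+ n = 1%:M) ->
  let kappa : affmap R := (k, K) in
  (exists! i : 'I_7, gl_conj K (reps i)) /\
  (* (1) *)
  (K = 1%:M -> aff_order2 kappa ->
     (same_affinity kappa aff_id \/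
      same_affinity kappa ((2%:R)^-1 *: e1, 1%:M) \/
      same_affinity kappa ((2%:R)^-1 *: e2, 1%:M) \/
      same_affinity kappa ((2%:R)^-1 *: e1 + (2%:R)^-1 *: e2, 1%:M)) /\
     aff_conj kappa ((2%:R)^-1 *: e1, 1%:M)) /\
  (* (2) *)
  (K = - 1%:M -> aff_conj kappa (0, - 1%:M)) /\
  (* (3) *)
  (gl_conj K matA -> aff_order2 kappa ->
     let P := aff_conj kappa (0, matA) in
     let Q := aff_conj kappa ((2%:R)^-1 *: e2, matA) in
     (P \/ Q) /\ ~ (P /\ Q)) /\
  (* (4) *)
  (gl_conj K matC -> aff_order2 kappa -> aff_conj kappa (0, matC)) /\
  (* (5) *)
  (gl_conj K ((matB *m matC) *m (matB *m matC)) ->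
     aff_conj kappa (0, (matB *m matC) *m (matB *m matC))) /\
  (* (6) *)
  (gl_conj K (matA *m matC) -> aff_conj kappa (0, matA *m matC)) /\
  (* (7) *)
  (gl_conj K (matB *m matC) -> aff_conj kappa (0, matB *m matC)).
Proof.
move=> uK hn kappa; rewrite /kappa.
split.
  move: uK hn; rewrite (mx2_eta K) unit_mx2 => /orP hs hn.
  have hs' : K 0 0 * K 1 1 - K 0 1 * K 1 0 = 1 \/ K 0 0 * K 1 1 - K 0 1 * K 1 0 = -1.
    by case: hs => /eqP ->; [left|right].
  have [i Hi] := exist_class hs' hn.
  exists i; split; first by apply/conjz_gl.
  move=> j /conjz_gl Hj; apply: reps_inj.
  exact: conjz_trans (conjz_sym Hi) Hj.
split; first by move=> ->; apply: part1.
split.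
  move=> ->; rewrite mx2_1 mx2_opp; apply: part_rot => //.
  by apply/conjz_gl; apply: conjz_refl.
split; first exact: part3.
split; first exact: part4.
split; first by rewrite BC2_mx => H; apply: part_rot.
split; first by rewrite AC_mx => H; apply: part_rot.
by rewrite BC_mx => H; apply: part_rot.
Qed.
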